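(* Let $T=(V,E)$ be a finite rooted tree with nonnegative partial costs, and $\Pr$ a probability distribution over a finite set of queries. The benefit function $B:2^V\to\mathbb{R}_{\ge0}$ is monotone (non-decreasing) and submodular.
   Context: $T=(V,E)$ is a finite rooted tree; $T(u)$ is the set of nodes of the subtree rooted at $u$ (including $u$); $A(u)$ the set of proper ancestors of $u$. Each non-leaf node is associated with a variable of a finite set $X$; $\mathrm{vars}(u)$ is the set of variables of nodes of $T(u)$; each query $q$ determines $Z_q\subseteq X$. For $R\subseteq V$, $w\in V$: $I_q(w,R)=1$ iff $w\in R$, $\mathrm{vars}(w)\subseteq Z_q$, and no $x\in A(w)\cap R$ has $\mathrm{vars}(x)\subseteq Z_q$; else $0$; $\mathbb{E}[I(w,R)]=\sum_q\Pr(q)I_q(w,R)$. Each node $x$ has partial cost $c(x)\ge0$, total cost $C(w)=\sum_{x\in T(w)}c(x)$. Benefit: $B(R)=\sum_{w\in R}\mathbb{E}[I(w,R)]C(w)$. *)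

(* Defs.v *)
From HB Require Import structures.
From mathcomp Require Import all_boot all_order all_algebra.
Set Implicit Arguments. Unset Strict Implicit. Unset Printing Implicit Defensive.
Import Order.TTheory GRing.Theory Num.Theory.
Local Open Scope ring_scope.

Section TreeBenefit.
Variables (V X Q : finType) (parent : V -> V).

(* A rooted tree is given by a root and a parent map with parent root = root
   and every node reaching the root by iterating parent (see the theorem's
   hypotheses).  u is a proper ancestor of w. *)
Definition anc (w : V) : {set V} :=
  [set u | [exists k : 'I_#|V|.+1, (0 < (k : nat))%N && (iter k parent w == u)]
           && (u != w)].

Definition subtree (u : V) : {set V} := [set w | (w == u) || (u \in anc w)].

Definition is_leaf (u : V) : bool := [forall w, (w != u) ==> (parent w != u)].

Variable var : V -> X. (* only meaningful on non-leaf nodes *)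

Definition vars (u : V) : {set X} :=
  [set var x | x in [set y in subtree u | ~~ is_leaf y]].

Variable Z : Q -> {set X}.

Definition Iq (q : Q) (w : V) (R : {set V}) : bool :=
  [&& w \in R, vars w \subset Z q &
      [forall x, ((x \in anc w) && (x \in R)) ==> ~~ (vars x \subset Z q)]].

Variables (F : realFieldType) (Pr : Q -> F) (c : V -> F).

Definition EI (w : V) (R : {set V}) : F := \sum_(q : Q) Pr q * (Iq q w R)%:R.

Definition Ctot (w : V) : F := \sum_(x in subtree w) c x.

Definition benefit (R : {set V}) : F := \sum_(w in R) EI w R * Ctot w.

End TreeBenefit.

(* Main.v *)
Require Import Defs.
From HB Require Import structures.
From mathcomp Require Import all_boot all_order all_algebra.
Import Order.TTheory GRing.Theory Num.Theory.
Local Open Scope ring_scope.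
Set Implicit Arguments. Unset Strict Implicit.

Lemma iter_bound (V : finType) (p : V -> V) (w : V) (n : nat) :
  (0 < n)%N -> exists k : nat, [/\ (0 < k)%N, (k <= #|V|)%N & iter k p w = iter n p w].
Proof.
elim: n {-2}n (leqnn n) => [|N IH] n hn n0; first by rewrite leqn0 in hn; rewrite (eqP hn) in n0.
case: (leqP n #|V|) => hnV; first by exists n.
pose f := fun i : 'I_#|V|.+1 => iter i p w.
have [/existsP[i /existsP[j /andP[ij /eqP fij]]]|none] :=
  boolP [exists i : 'I_#|V|.+1, exists j : 'I_#|V|.+1, (i < j)%N && (f i == f j)].
  have jn : (j <= n)%N by apply: leq_trans (ltnW hnV); rewrite -ltnS.
  have e : iter n p w = iter (n - j + i) p w.
    by rewrite -{1}(subnK jn) iterD -/(f j) -fij /f -iterD.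
  have hlt : (n - j + i < n)%N.
    by rewrite -(ltn_add2r j) addnAC subnK // ltn_add2l.
  have h1 : (n - j + i <= N)%N by rewrite -ltnS; apply: leq_trans hlt hn.
  have h2 : (0 < n - j + i)%N.
    by rewrite addn_gt0 subn_gt0 ; apply/orP; left; exact: leq_trans (ltn_ord j) hnV.
  have [k [k0 kV ek]] := IH (n - j + i)%N h1 h2.
  by exists k; rewrite ek -e.
have injf : injective f.
  move=> i j fij; apply: val_inj => /=.
  case: (ltngtP i j) => // h.
    by move: none => /existsPn /(_ i) /existsPn /(_ j); rewrite h fij eqxx.
  by move: none => /existsPn /(_ j) /existsPn /(_ i); rewrite h fij eqxx.
by have := leq_card f injf; rewrite card_ord ltnn.
Qed.

Lemma anc_iter (V : finType) (p : V -> V) (w : V) (n : nat) :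
  (0 < n)%N -> iter n p w != w -> iter n p w \in anc p w.
Proof.
move=> n0 ne; have [k [k0 kV ek]] := iter_bound p w n0.
rewrite inE ne andbT; apply/existsP; exists (Ordinal (kV : (k < #|V|.+1)%N)) => /=.
by rewrite k0 ek eqxx.
Qed.

Lemma ancP (V : finType) (p : V -> V) (w u : V) :
  u \in anc p w -> exists n : nat, [/\ (0 < n)%N, iter n p w = u & u != w].
Proof.
rewrite inE => /andP[/existsP[k /andP[k0 /eqP ek]] ne].
by exists k.
Qed.

Lemma iter_root (V : finType) (p : V -> V) (root : V) (hroot : p root = root) n :
  iter n p root = root.
Proof. by elim: n => //= n ->. Qed.

Lemma cycle_root (V : finType) (p : V -> V) (root : V) (hroot : p root = root)
  (hreach : forall v : V, exists k : nat, iter k p v = root) (w : V) n :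
  (0 < n)%N -> iter n p w = w -> w = root.
Proof.
move=> n0 e; have [k ek] := hreach w.
have e2 : forall m, iter (n * m) p w = w.
  by elim=> [|m IHm]; rewrite ?muln0 // mulnS iterD IHm e.
have kk : (k <= n * k)%N by rewrite leq_pmull.
by rewrite -(e2 k) -(subnK kk) iterD ek iter_root.
Qed.

Lemma anc_trans (V : finType) (p : V -> V) (root : V) (hroot : p root = root)
  (hreach : forall v : V, exists k : nat, iter k p v = root) (w u y : V) :
  u \in anc p w -> y \in anc p u -> y \in anc p w.
Proof.
move=> /ancP[n1 [n10 e1 ne1]] /ancP[n2 [n20 e2 ne2]].
have ey : iter (n2 + n1) p w = y by rewrite iterD e1 e2.
rewrite -ey; apply: anc_iter; first by rewrite addn_gt0 n20.
apply/eqP => ew.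
have wr : w = root by apply: (cycle_root hroot hreach _ ew); rewrite addn_gt0 n20.
by move: ne1; rewrite -e1 wr iter_root // eqxx.
Qed.

Lemma subtreeE (V : finType) (p : V -> V) (x u : V) :
  (x \in subtree p u) = (x == u) || (u \in anc p x).
Proof. by rewrite [in LHS]inE. Qed.

Lemma chain (V : finType) (p : V -> V) (x u1 u2 : V) :
  x \in subtree p u1 -> x \in subtree p u2 -> u1 != u2 ->
  (u1 \in anc p u2) || (u2 \in anc p u1).
Proof.
rewrite !subtreeE => /orP[/eqP <-|a1] /orP[/eqP e2|a2] ne.
- by rewrite e2 eqxx in ne.
- by rewrite a2 orbT.
- by rewrite -e2 a1.
move: a1 a2 => /ancP[k1 [k10 e1 _]] /ancP[k2 [k20 e2 _]].
case: (leqP k1 k2) => hk.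
  have ey : iter (k2 - k1) p u1 = u2 by rewrite -e1 -iterD subnK.
  apply/orP; right; rewrite -ey; apply: anc_iter; last by rewrite ey eq_sym.
  rewrite subn_gt0 ltn_neqAle hk andbT; apply/eqP => kk; by rewrite -e1 -e2 kk eqxx in ne.
have ey : iter (k1 - k2) p u2 = u1 by rewrite -e2 -iterD subnK // ltnW.
apply/orP; left; rewrite -ey; apply: anc_iter; last by rewrite ey.
by rewrite subn_gt0.
Qed.

Definition topb (V : finType) (p : V -> V) (S : {set V}) (w : V) : bool :=
  (w \in S) && [forall y, (y \in anc p w) ==> (y \notin S)].

Definition cov (V : finType) (p : V -> V) (S : {set V}) (x : V) : bool :=
  [exists w, (w \in S) && (x \in subtree p w)].

Lemma key (F : realFieldType) (V : finType) (p : V -> V) (root : V) (hroot : p root = root)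
  (hreach : forall v : V, exists k : nat, iter k p v = root) (S : {set V}) (x : V) :
  \sum_w ((topb p S w && (x \in subtree p w))%:R : F) = (cov p S x)%:R.
Proof.
rewrite /cov; case: existsP => [[w0 /andP[w0S xw0]] | none]; last first.
  apply: big1 => w _; case: (boolP (topb p S w)) => //= /andP[wS _].
  by case: (boolP (x \in subtree p w)) => // xw; case: none; exists w; rewrite wS xw.
have P0 : (w0 \in S) && (x \in subtree p w0) by rewrite w0S xw0.
case: (@arg_minnP _ w0 (fun w => (w \in S) && (x \in subtree p w)) (fun w => #|anc p w|) P0)
  => w1 /andP[w1S xw1] minw1.
have top1 : topb p S w1.
  rewrite /topb w1S /=; apply/forallP => y; apply/implyP => ya; apply/negP => yS.
  have xy : x \in subtree p y.
    rewrite subtreeE; apply/orP; right.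
    move: xw1; rewrite subtreeE => /orP[/eqP ->//|a]; exact: (anc_trans hroot hreach a ya).
  have := minw1 y; rewrite yS xy => /(_ isT).
  apply/negP; rewrite -ltnNge; apply: proper_card; apply/properP; split.
    by apply/subsetP => z za; exact: (anc_trans hroot hreach ya za).
  by exists y => //; rewrite inE eqxx andbF.
rewrite (bigD1 w1) //= top1 xw1 big1 ?addr0 // => w ne.
apply/eqP; rewrite pnatr_eq0 eqb0; apply/negP => /andP[tw2 xw].
have := chain xw xw1 ne => /orP[a|a].
  by move: top1 => /andP[_ /forallP /(_ w)]; rewrite a; move: tw2 => /andP[->].
by move: tw2 => /andP[_ /forallP /(_ w1)]; rewrite a w1S.
Qed.

Definition Sq (V X Q : finType) (p : V -> V) (var : V -> X) (Z : Q -> {set X})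
  (q : Q) (R : {set V}) : {set V} := [set y in R | vars p var y \subset Z q].

Lemma Iq_top (V X Q : finType) (p : V -> V) (var : V -> X) (Z : Q -> {set X}) q w R :
  Iq p var Z q w R = topb p (Sq p var Z q R) w.
Proof.
rewrite /Iq /topb /Sq [w \in [set _ in _ | _]]inE andbA; congr (_ && _).
apply: eq_forallb => y; rewrite [y \in [set _ in _ | _]]inE.
by case: (y \in anc p w); case: (y \in R).
Qed.

Lemma decomp (F : realFieldType) (V X Q : finType) (root : V) (p : V -> V)
  (hroot : p root = root)
  (hreach : forall v : V, exists k : nat, iter k p v = root)
  (var : V -> X) (Z : Q -> {set X}) (Pr : Q -> F) (c : V -> F) (R : {set V}) :
  benefit p var Z Pr c R =
  \sum_q Pr q * \sum_x (cov p (Sq p var Z q R) x)%:R * c x.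
Proof.
rewrite /benefit /EI.
under eq_bigr do rewrite mulr_suml.
rewrite exchange_big /=; apply: eq_bigr => q _.
transitivity (Pr q * \sum_w (topb p (Sq p var Z q R) w)%:R * Ctot p c w).
  rewrite mulr_sumr big_mkcond /=; apply: eq_bigr => w _.
  rewrite Iq_top mulrA; case: ifP => // wR.
  by rewrite /topb /Sq inE wR /= mulr0 mul0r.
apply: congr1.
under eq_bigr do rewrite -(key _ hroot hreach).
under eq_bigr do rewrite mulr_suml.
rewrite exchange_big /=; apply: eq_bigr => w _.
rewrite /Ctot mulr_sumr [LHS]big_mkcond /=; apply: eq_bigr => x _.
by case: (topb _ _ _); case: (x \in subtree p w); rewrite /= ?mul1r ?mul0r.
Qed.
Lemma SqE (V X Q : finType) (p : V -> V) (var : V -> X) (Z : Q -> {set X}) q R y :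
  (y \in Sq p var Z q R) = (y \in R) && (vars p var y \subset Z q).
Proof. by rewrite [LHS]inE. Qed.


Lemma cov_mono (V : finType) (p : V -> V) (S1 S2 : {set V}) x :
  S1 \subset S2 -> cov p S1 x -> cov p S2 x.
Proof.
move=> /subsetP sub /existsP[w /andP[wS xw]]; apply/existsP; exists w.
by rewrite (sub _ wS) xw.
Qed.

Lemma Sq_mono (V X Q : finType) (p : V -> V) (var : V -> X) (Z : Q -> {set X}) q
  (R1 R2 : {set V}) : R1 \subset R2 -> Sq p var Z q R1 \subset Sq p var Z q R2.
Proof.
move=> /subsetP sub; apply/subsetP => y; rewrite !SqE => /andP[yR ->].
by rewrite (sub _ yR).
Qed.

Lemma cov_add (V X Q : finType) (p : V -> V) (var : V -> X) (Z : Q -> {set X}) q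
  (R : {set V}) v x :
  cov p (Sq p var Z q (v |: R)) x =
  ((vars p var v \subset Z q) && (x \in subtree p v)) || cov p (Sq p var Z q R) x.
Proof.
apply/idP/idP.
  case/existsP => w /andP[]; rewrite SqE in_setU1 => /andP[/orP[/eqP ->|wR] vw] xw.
    by rewrite vw xw.
  by apply/orP; right; apply/existsP; exists w; rewrite SqE wR vw xw.
case/orP => [/andP[vv xv] | /existsP[w /andP[]]].
  by apply/existsP; exists v; rewrite SqE in_setU1 eqxx vv xv.
rewrite SqE => /andP[wR vw] xw.
by apply/existsP; exists w; rewrite SqE in_setU1 wR vw xw orbT.
Qed.

Unset Implicit Arguments.

Theorem lemma7 (F : realFieldType) (V X Q : finType)
  (root : V) (parent : V -> V)
  (hroot : parent root = root)
  (hreach : forall v : V, exists k : nat, iter k parent v = root)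
  (var : V -> X) (Z : Q -> {set X})
  (Pr : Q -> F) (hPr0 : forall q, 0 <= Pr q) (hPr1 : \sum_(q : Q) Pr q = 1)
  (c : V -> F) (hc : forall x, 0 <= c x) :
  let B := benefit parent var Z Pr c in
  (forall R1 R2 : {set V}, R1 \subset R2 -> B R1 <= B R2) /\
  (forall (R1 R2 : {set V}) (v : V), R1 \subset R2 -> v \notin R2 ->
     B (v |: R2) - B R2 <= B (v |: R1) - B R1).
Proof.
move=> B; rewrite /B; split.
  move=> R1 R2 sub; rewrite !(decomp hroot hreach).
  apply: ler_sum => q _; apply: ler_wpM2l => //.
  apply: ler_sum => x _; apply: ler_wpM2r => //.
  rewrite ler_nat; have := @cov_mono _ parent _ _ x (@Sq_mono _ _ _ parent var Z q _ _ sub).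
  by case: (cov _ _ _); case: (cov _ _ _) => // ->.
move=> R1 R2 v sub _; rewrite !(decomp hroot hreach) -!sumrB.
apply: ler_sum => q _; rewrite -!mulrBr; apply: ler_wpM2l => //.
rewrite -!sumrB; apply: ler_sum => x _; rewrite -!mulrBl; apply: ler_wpM2r => //.
rewrite !cov_add.
have := @cov_mono _ parent _ _ x (@Sq_mono _ _ _ parent var Z q _ _ sub).
case: (cov parent (Sq parent var Z q R1) x); case: (cov parent (Sq parent var Z q R2) x);
  case: (_ && _) => //= h; rewrite ?subrr ?subr0 ?lexx ?ler01 //; by have := h isT.
Qed.
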